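(* Let $A$ be a 0-dialgebra with involution over a field $\mathbb{F}$. On the vector space $A\oplus A$ define $(a,b)\dashv(c,d)=(a\dashv c-d\vdash b^\ast,\; a^\ast\dashv d+c\vdash b)$, $(a,b)\vdash(c,d)=(a\vdash c-d\dashv b^\ast,\; a^\ast\vdash d+c\dashv b)$ and $(a,b)^\ast=(a^\ast,-b)$. Then $A\oplus A$ with these operations is a 0-dialgebra with involution.
   Context: A 0-dialgebra is a vector space with two bilinear operations $\dashv,\vdash$ satisfying the bar identities $a\dashv(b\dashv c)=a\dashv(b\vdash c)$ and $(a\dashv b)\vdash c=(a\vdash b)\vdash c$ for all $a,b,c$. A 0-dialgebra with involution is a 0-dialgebra with a linear map $a\mapsto a^\ast$ such that $(a^\ast)^\ast=a$, $(a\dashv b)^\ast=b^\ast\vdash a^\ast$ and $(a\vdash b)^\ast=b^\ast\dashv a^\ast$ for all $a,b$. *)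

(* Defs.v *)
From HB Require Import structures.
From mathcomp Require Import all_boot all_order all_algebra.
Set Implicit Arguments. Unset Strict Implicit. Unset Printing Implicit Defensive.
Import GRing.Theory.
Local Open Scope ring_scope.

Section Dialg.
Variables (F : fieldType) (V : lmodType F).

Definition bilinear_op (op : V -> V -> V) : Prop :=
  (forall (k : F) (a b c : V), op (k *: a + b) c = k *: op a c + op b c) /\
  (forall (k : F) (a b c : V), op a (k *: b + c) = k *: op a b + op a c).

(* 0-dialgebra: two bilinear operations satisfying the bar identities;
   l = "dashv" (left), r = "vdash" (right). *)
Definition dialgebra0 (l r : V -> V -> V) : Prop :=
  [/\ bilinear_op l, bilinear_op r,
      (forall a b c, l a (l b c) = l a (r b c)) &
      (forall a b c, r (l a b) c = r (r a b) c)].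

Definition dialgebra0_inv (l r : V -> V -> V) (s : V -> V) : Prop :=
  [/\ dialgebra0 l r,
      (forall (k : F) (a b : V), s (k *: a + b) = k *: s a + s b),
      (forall a, s (s a) = a),
      (forall a b, s (l a b) = r (s b) (s a)) &
      (forall a b, s (r a b) = l (s b) (s a))].

Definition dbl_l (l r : V -> V -> V) (s : V -> V) (x y : V * V) : V * V :=
  (l x.1 y.1 - r y.2 (s x.2), l (s x.1) y.2 + r y.1 x.2).
Definition dbl_r (l r : V -> V -> V) (s : V -> V) (x y : V * V) : V * V :=
  (r x.1 y.1 - l y.2 (s x.2), r (s x.1) y.2 + l y.1 x.2).
Definition dbl_s (s : V -> V) (x : V * V) : V * V := (s x.1, - x.2).

End Dialg.

(* Main.v *)
Require Import Defs.
From HB Require Import structures.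
From mathcomp Require Import all_boot all_order all_algebra.
Import GRing.Theory.
Local Open Scope ring_scope.

Section HelperS.
Context {F : fieldType} {V : lmodType F}.

Lemma bil_facts {op : V -> V -> V} : bilinear_op op ->
  (forall a b c, op (a + b) c = op a c + op b c) /\
      (forall a b c, op a (b + c) = op a b + op a c) /\
      (forall a c, op (- a) c = - op a c) /\
      (forall a c, op a (- c) = - op a c) /\
      (forall k a c, op (k *: a) c = k *: op a c) /\
      (forall k a c, op a (k *: c) = k *: op a c).
Proof.
case=> h1 h2.
have D1 a b c : op (a + b) c = op a c + op b c by have := h1 1 a b c; rewrite !scale1r.
have D2 a b c : op a (b + c) = op a b + op a c by have := h2 1 a b c; rewrite !scale1r.
have O1 c : op 0 c = 0.
  by have := D1 0 0 c; rewrite addr0 => /esym/eqP; rewrite -subr_eq0 addrK => /eqP.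
have O2 c : op c 0 = 0.
  by have := D2 c 0 0; rewrite addr0 => /esym/eqP; rewrite -subr_eq0 addrK => /eqP.
have Z1 k a c : op (k *: a) c = k *: op a c by have := h1 k a 0 c; rewrite !addr0 O1 addr0.
have Z2 k a c : op a (k *: c) = k *: op a c by have := h2 k a c 0; rewrite !addr0 O2 addr0.
do !split=> //.
- by move=> a c; rewrite -scaleN1r Z1 scaleN1r.
- by move=> a c; rewrite -scaleN1r Z2 scaleN1r.
Qed.

Lemma lin_facts {s : V -> V} : (forall (k : F) (a b : V), s (k *: a + b) = k *: s a + s b) ->
  [/\ (forall a b, s (a + b) = s a + s b), (forall a, s (- a) = - s a) &
      (forall k a, s (k *: a) = k *: s a)].
Proof.
move=> h.
have D a b : s (a + b) = s a + s b by have := h 1 a b; rewrite !scale1r.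
have O : s 0 = 0.
  by have := D 0 0; rewrite addr0 => /esym/eqP; rewrite -subr_eq0 addrK => /eqP.
have Z k a : s (k *: a) = k *: s a by have := h k a 0; rewrite !addr0 O addr0.
by split=> // a; rewrite -scaleN1r Z scaleN1r.
Qed.
End HelperS.

Theorem proposition3p6 (F : fieldType) (V : lmodType F)
    (l r : V -> V -> V) (s : V -> V) :
  dialgebra0_inv l r s ->
  dialgebra0_inv (V := (V * V)%type) (dbl_l l r s) (dbl_r l r s) (dbl_s s).
Proof.
case=> [[bl br b1 b2] sl ss sl' sr'].
case: (bil_facts bl) => [lD1 [lD2 [lN1 [lN2 [lZ1 lZ2]]]]].
case: (bil_facts br) => [rD1 [rD2 [rN1 [rN2 [rZ1 rZ2]]]]].
case: (lin_facts sl) => sD sN sZ.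
rewrite /dbl_l /dbl_r /dbl_s.
split; [split; [split|split| |]| | | |] => /=.
all: try (move=> k [a b] [c d] [e f] /=).
all: try (move=> [a b] [c d] [e f] /=).
all: try (move=> [a b] [c d] /=).
all: try (move=> k [a b] [c d] /=).
all: try (move=> [a b] /=).
all: rewrite ?(lD1, lD2, lN1, lN2, lZ1, lZ2, rD1, rD2, rN1, rN2, rZ1, rZ2, sD, sN, sZ, ss, sl', sr', b1, b2, opprK, scalerDr, scalerN).
all: apply: injective_projections => /=.
all: rewrite ?(scalerBr, scalerDr, opprD, opprK, addrA).
all: try done.
all: try by rewrite addrC.
all: try by rewrite scalerN.
all: by congr (_ + _); exact: addrAC.
Qed.
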